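(* Let $S\subseteq\mathcal S_d$ be nonempty, $[d]$ partitioned into groups $G_1,\dots,G_g$, $\bar\alpha,\bar\beta\in[0,1]^g$, $k\in[d]$, and $\alpha\ge 1$. Let $\mathcal{F}\subseteq\mathcal S_d$ be the (nonempty) set of $(\bar\alpha,\bar\beta)$-$k$-fair rankings. If $\tilde\pi\in\mathcal F$ satisfies $\sum_{\pi\in S}F(\pi,\tilde\pi)\le\alpha\min_{\sigma\in\mathcal F}\sum_{\pi\in S}F(\pi,\sigma)$, then $\sum_{\pi\in S}\kappa(\pi,\tilde\pi)\le 2\alpha\min_{\sigma\in\mathcal F}\sum_{\pi\in S}\kappa(\pi,\sigma)$.
   Context: $\mathcal{S}_d$ is the set of rankings of $[d]$, $\pi(a)$ the rank of $a$. A ranking is $(\bar\alpha,\bar\beta)$-$k$-fair if for every $i\in[g]$ its top $k$ positions contain at least $\lfloor\alpha_i k\rfloor$ and at most $\lceil\beta_i k\rceil$ members of $G_i$. $F(\pi,\sigma)=\sum_{i\in[d]}|\pi(i)-\sigma(i)|$ is the Spearman footrule distance; $\kappa(\pi,\sigma)$ is the Kendall-tau distance, the number of unordered pairs $\{a,b\}\subseteq[d]$ ordered differently by $\pi$ and $\sigma$. *)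

(* Defs.v *)
From HB Require Import structures.
From mathcomp Require Import all_boot all_order all_algebra all_fingroup.
From mathcomp Require Import reals.
Set Implicit Arguments. Unset Strict Implicit. Unset Printing Implicit Defensive.
Import Order.TTheory GRing.Theory Num.Theory.
Local Open Scope ring_scope.

(* A ranking of [d] is a permutation pi : 'S_d; pi a is the (0-indexed)
   rank/position of item a. Top-k positions are those with pi a < k. *)

Definition top_count (d g : nat) (grp : 'I_d -> 'I_g) (i : 'I_g) (k : nat)
  (pi : 'S_d) : nat :=
  #|[set a : 'I_d | (grp a == i) && (pi a < k)%N]|.

Definition k_fair (R : realType) (d g : nat) (grp : 'I_d -> 'I_g)
  (al be : 'I_g -> R) (k : nat) (pi : 'S_d) : Prop :=
  forall i : 'I_g,
    (Num.floor (al i * k%:R) <= (top_count grp i k pi)%:Z)%R /\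
    ((top_count grp i k pi)%:Z <= Num.ceil (be i * k%:R))%R.

Definition footrule (d : nat) (pi sigma : 'S_d) : nat :=
  (\sum_(a : 'I_d) absz ((pi a : nat)%:Z - (sigma a : nat)%:Z))%N.

Definition kendall (d : nat) (pi sigma : 'S_d) : nat :=
  #|[set p : 'I_d * 'I_d | (p.1 < p.2)%N &&
      ((pi p.1 < pi p.2)%N != (sigma p.1 < sigma p.2)%N)]|.

Definition cost_F (d : nat) (S : {set 'S_d}) (sigma : 'S_d) : nat :=
  (\sum_(pi in S) footrule pi sigma)%N.

Definition cost_K (d : nat) (S : {set 'S_d}) (sigma : 'S_d) : nat :=
  (\sum_(pi in S) kendall pi sigma)%N.

(* Main.v *)
Require Import Defs.
From HB Require Import structures.
From mathcomp Require Import all_boot all_order all_algebra all_fingroup.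
From mathcomp Require Import reals.
From mathcomp Require Import zify.

Lemma cnt_ord k m n : \sum_(i < k) ((m <= i) && (i < n) : nat) = minn k n - minn k m.
Proof.
elim: k => [|k IH]; first by rewrite big_ord0; lia.
rewrite big_ord_recr /= IH.
case: (leqP m k); case: (ltnP k n) => /=; lia.
Qed.

Section Dist.
Variable d : nat.

Definition Ko (pi sigma : 'S_d) : nat :=
  \sum_(x : 'I_d) \sum_(y : 'I_d) ((sigma x < sigma y) && (pi y < pi x)).

Lemma sum_split2 {a b : 'I_d} (h : 'I_d -> nat) : a != b ->
  \sum_x h x = h a + h b + \sum_(x | (x != a) && (x != b)) h x.
Proof.
move=> ab; rewrite (bigD1 a) //= (bigD1 b) /=; last by rewrite eq_sym.
by rewrite addnA.
Qed.

Lemma perm_neq (s : 'S_d) {x y : 'I_d} : x != y -> (s x : nat) != s y.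
Proof. by move=> xy; apply: contra xy => /eqP/val_inj/perm_inj ->. Qed.

Lemma pos_sum (s : 'S_d) (m : nat) : m <= d -> \sum_c (s c < m : nat) = m.
Proof.
move=> md.
rewrite -(reindex_inj (h := s) (P := xpredT) (F := fun i : 'I_d => (i < m : nat))) /=; last exact: perm_inj.
transitivity (\sum_(i < d) ((0 <= i) && (i < m) : nat)); first by apply: eq_bigr.
rewrite cnt_ord; lia.
Qed.

Lemma pos_split (pi sigma : 'S_d) (e : 'I_d) :
  (pi e : nat) = \sum_c ((pi c < pi e) && (sigma c < sigma e) : nat)
              + \sum_c ((sigma e < sigma c) && (pi c < pi e) : nat).
Proof.
rewrite -{1}(pos_sum pi (pi e) (ltnW (ltn_ord (pi e)))) -big_split /=.
apply: eq_bigr => c _. idtac.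
case: (eqVneq c e) => [->|ce]; first by rewrite ltnn andbF.
have := perm_neq sigma ce.
case: (ltngtP (sigma c) (sigma e)) => //= _ _; case: (pi c < pi e) => //.
Qed.

Lemma footrule_le2 (pi sigma : 'S_d) : footrule pi sigma <= 2 * Ko pi sigma.
Proof.
rewrite /footrule.
have H : forall a : 'I_d, absz ((pi a)%:Z - (sigma a)%:Z)%R <=
   \sum_c ((sigma a < sigma c) && (pi c < pi a) : nat)
        + \sum_c ((sigma c < sigma a) && (pi a < pi c) : nat).
  move=> a.
  have h1 := pos_split pi sigma a.
  have h2 := pos_split sigma pi a.
  have e : \sum_c ((pi c < pi a) && (sigma c < sigma a) : nat) =
           \sum_c ((sigma c < sigma a) && (pi c < pi a) : nat).
    by apply: eq_bigr => c _; rewrite andbC.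
  have e2 : \sum_c ((pi a < pi c) && (sigma c < sigma a) : nat) =
           \sum_c ((sigma c < sigma a) && (pi a < pi c) : nat).
    by apply: eq_bigr => c _; rewrite andbC.
  rewrite e in h1; rewrite e2 in h2; lia.
apply: leq_trans (leq_sum _ (fun a _ => H a)) _.
rewrite big_split /= mul2n -addnn; apply: eq_leq; congr (_ + _).
by rewrite /Ko exchange_big.
Qed.

Lemma card_sum (T : finType) (P : pred T) : #|[set p | P p]| = \sum_p (P p : nat).
Proof.
rewrite -sum1_card big_mkcond; apply: eq_bigr => p _; rewrite inE; by case: (P p).
Qed.

Lemma kendall_Ko (pi sigma : 'S_d) : kendall pi sigma = Ko pi sigma.
Proof.
rewrite /kendall card_sum -(pair_bigA _ (fun x y : 'I_d =>
  ((x < y) && ((pi x < pi y) != (sigma x < sigma y)) : nat))) /=.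
set A := \sum_x \sum_y _.
have pw : forall x y : 'I_d,
  ((x < y) && ((pi x < pi y) != (sigma x < sigma y)) : nat)
  + ((y < x) && ((pi y < pi x) != (sigma y < sigma x)) : nat)
  = ((sigma x < sigma y) && (pi y < pi x) : nat)
  + ((sigma y < sigma x) && (pi x < pi y) : nat).
  move=> x y; case: (eqVneq x y) => [->|xy]; first by rewrite !ltnn.
  have h1 : (x : nat) != y by apply: contra xy => /eqP/val_inj ->.
  have h2 := perm_neq pi xy; have h3 := perm_neq sigma xy.
  move: h1 h2 h3.
  case: (ltngtP x y); case: (ltngtP (pi x) (pi y)); case: (ltngtP (sigma x) (sigma y)) => //.
have E : A + \sum_(x : 'I_d) \sum_(y : 'I_d) ((y < x) && ((pi y < pi x) != (sigma y < sigma x)) : nat)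
  = Ko pi sigma + \sum_(x : 'I_d) \sum_(y : 'I_d) ((sigma y < sigma x) && (pi x < pi y) : nat).
  rewrite /A /Ko -!big_split; apply: eq_bigr => x _; rewrite -!big_split.
  by apply: eq_bigr => y _; apply: pw.
move: E; rewrite [X in A + X = _]exchange_big [X in _ = _ + X]exchange_big /=.
rewrite -/A -/(Ko pi sigma). lia.
Qed.

Lemma Ko_sym (pi sigma : 'S_d) : Ko sigma pi = Ko pi sigma.
Proof.
rewrite /Ko exchange_big; apply: eq_bigr => x _; apply: eq_bigr => y _.
by rewrite andbC.
Qed.

Lemma F_sym (pi sigma : 'S_d) : footrule sigma pi = footrule pi sigma.
Proof. rewrite /footrule; apply: eq_bigr => x _; lia. Qed.


Lemma t2 (pa pb pc sa sb sc : nat) : pc != pa -> pc != pb -> sc != sa -> sc != sb -> pb < pa -> sa < sb ->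
((sc<sa) && (pa<pc)) + ((sc<sb) && (pb<pc)) + ((sa<sc) && (pc<pa)) + ((sb<sc) && (pc<pb)) <=
((sc<sa) && (pb<pc)) + ((sc<sb) && (pa<pc)) + ((sa<sc) && (pc<pb)) + ((sb<sc) && (pc<pa)) + 2*((sa<sc) && (sc<sb)).
Proof.
case: (ltngtP sc sa); case: (ltngtP sc sb); case: (ltngtP pc pa); case: (ltngtP pc pb) => //= *; lia.
Qed.

Lemma sum2_split (a b : 'I_d) (F : 'I_d -> 'I_d -> nat) : a != b ->
  \sum_x \sum_y F x y = F a a + F a b + F b a + F b b
   + \sum_(c | (c != a) && (c != b)) F c a + \sum_(c | (c != a) && (c != b)) F c b
   + \sum_(c | (c != a) && (c != b)) F a c + \sum_(c | (c != a) && (c != b)) F b c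
   + \sum_(x | (x != a) && (x != b)) \sum_(y | (y != a) && (y != b)) F x y.
Proof.
move=> ab.
rewrite (eq_bigr (fun x => F x a + F x b + \sum_(y | (y != a) && (y != b)) F x y));
  last by move=> x _; rewrite (sum_split2 _ ab).
rewrite !big_split /= !(sum_split2 _ ab).
set s1 := \sum_(c < d | _) F c a; set s2 := \sum_(c < d | _) F c b.
set s3 := \sum_(c < d | _) F a c; set s4 := \sum_(c < d | _) F b c.
set s5 := \sum_(c < d | _) \sum_(y < d | _) F c y.
lia.
Qed.

Lemma step (pi sigma : 'S_d) (b0 : 'I_d) : pi b0 < sigma b0 ->
  exists pi' : 'S_d, footrule pi' sigma < footrule pi sigma /\
    Ko pi sigma + footrule pi' sigma <= Ko pi' sigma + footrule pi sigma.
Proof.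
move=> Pb0.
case: (@arg_minnP _ b0 (fun b => pi b < sigma b) (fun b => sigma b) Pb0) => b Pb minb.
have [a Ha] : exists a, [&& pi b <= sigma a, sigma a < sigma b & sigma b <= pi a].
  case: (boolP [exists a, [&& pi b <= sigma a, sigma a < sigma b & sigma b <= pi a]]).
    by move/existsP.
  move/existsPn => H; exfalso.
  pose X := [set e | (pi b <= sigma e) && (sigma e < sigma b)].
  pose Y := [set i : 'I_d | (pi b < i) && (i < sigma b)].
  pose Z := [set i : 'I_d | (pi b <= i) && (i < sigma b)].
  have sub1 : pi @: X \subset Y.
    apply/subsetP => y /imsetP [e]; rewrite inE => /andP [h1 h2] ->; rewrite inE.
    have nd : ~~ (pi e < sigma e).
      by apply/negP => pe; have := minb e pe; lia.
    have eb : e != b by apply: contraTneq h2 => ->; rewrite ltnn.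
    have := perm_neq pi eb; have := H e; rewrite h1 h2 /=; lia.
  have sub2 : Z \subset sigma @: X.
    apply/subsetP => i; rewrite inE => hi; apply/imsetP; exists (sigma^-1 i)%g.
      by rewrite inE permKV.
    by rewrite permKV.
  have prop : Y \proper Z.
    apply/properP; split.
      by apply/subsetP => i; rewrite !inE => /andP [h1 h2]; rewrite h2 ltnW.
    by exists (pi b); rewrite !inE ?ltnn ?leqnn //=.
  have c1 := subset_leq_card sub1; have c2 := subset_leq_card sub2.
  have c3 := proper_card prop.
  rewrite !card_imset in c1 c2; try exact: perm_inj.
  by have := leq_ltn_trans (leq_trans c2 c1) c3; rewrite ltnn.
move: Ha => /and3P [pbs sab spa].
have ab : a != b by apply: contraTneq sab => ->; rewrite ltnn.
pose pi' := (tperm a b * pi)%g.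
have pa' : pi' a = pi b by rewrite permM tpermL.
have pb' : pi' b = pi a by rewrite permM tpermR.
have pc' : forall c, c != a -> c != b -> pi' c = pi c.
  by move=> c ca cb; rewrite permM tpermD // eq_sym.
have HF : footrule pi sigma = footrule pi' sigma + 2 * (sigma b - sigma a).
  rewrite /footrule !(sum_split2 _ ab) pa' pb'.
  rewrite (eq_bigr (P := fun x => (x != a) && (x != b)) (F1 := fun x => absz ((pi' x : nat)%:Z - (sigma x : nat)%:Z)%R)
     (fun x => absz ((pi x : nat)%:Z - (sigma x : nat)%:Z)%R)); last first.
    by move=> x /andP [xa xb]; rewrite pc'.
  set s := \sum_(x | _) _. lia.
exists pi'; split; first lia.
have HK : Ko pi sigma <= Ko pi' sigma + 1 + 2 * (sigma b - sigma a - 1).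
  have pba : pi b < pi a by apply: leq_ltn_trans pbs (leq_trans sab spa).
  have sba : (sigma b < sigma a) = false by apply/negbTE; rewrite -leqNgt ltnW.
  have pab : (pi a < pi b) = false by apply/negbTE; rewrite -leqNgt ltnW.
  pose P := fun x : 'I_d => (x != a) && (x != b).
  have E5 : \sum_(x | P x) \sum_(y | P y) ((sigma x < sigma y) && (pi' y < pi' x) : nat)
     = \sum_(x | P x) \sum_(y | P y) ((sigma x < sigma y) && (pi y < pi x) : nat).
    apply: eq_bigr => x /andP [xa xb]; apply: eq_bigr => y /andP [ya yb].
    by rewrite !pc'.
  have W : \sum_(c | P c) ((sigma a < sigma c) && (sigma c < sigma b) : nat) <= sigma b - sigma a - 1.
    apply: (@leq_trans (\sum_c ((sigma a < sigma c) && (sigma c < sigma b) : nat))).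
      rewrite [X in X <= _]big_mkcond; apply: leq_sum => c _; by case: ifP.
    rewrite -(reindex_inj (h := sigma) (P := xpredT)
      (F := fun i : 'I_d => ((sigma a < i) && (i < sigma b) : nat))) /=; last exact: perm_inj.
    rewrite (cnt_ord d (sigma a).+1 (sigma b)).
    have := ltn_ord (sigma b); lia.
  have E : \sum_(c | P c) ((sigma c < sigma a) && (pi a < pi c) : nat)
         + \sum_(c | P c) ((sigma c < sigma b) && (pi b < pi c) : nat)
         + \sum_(c | P c) ((sigma a < sigma c) && (pi c < pi a) : nat)
         + \sum_(c | P c) ((sigma b < sigma c) && (pi c < pi b) : nat)
         <= \sum_(c | P c) ((sigma c < sigma a) && (pi' a < pi' c) : nat)
         + \sum_(c | P c) ((sigma c < sigma b) && (pi' b < pi' c) : nat)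
         + \sum_(c | P c) ((sigma a < sigma c) && (pi' c < pi' a) : nat)
         + \sum_(c | P c) ((sigma b < sigma c) && (pi' c < pi' b) : nat)
         + 2 * \sum_(c | P c) ((sigma a < sigma c) && (sigma c < sigma b) : nat).
    rewrite big_distrr /= -!big_split /=; apply: leq_sum => c /andP [ca cb].
    rewrite pa' pb' !pc' //.
    apply: t2 => //; [exact: perm_neq|exact: perm_neq|exact: perm_neq|exact: perm_neq].
  rewrite /Ko !(sum2_split _ _ _ ab) -/P E5 pa' pb' !ltnn sab pba sba pab /=.
  rewrite pa' pb' in E.
  set s1 := \sum_(c | P c) ((sigma c < sigma a) && (pi a < pi c) : nat) in E *.
  set s2 := \sum_(c | P c) ((sigma c < sigma b) && (pi b < pi c) : nat) in E *.
  set s3 := \sum_(c | P c) ((sigma a < sigma c) && (pi c < pi a) : nat) in E *.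
  set s4 := \sum_(c | P c) ((sigma b < sigma c) && (pi c < pi b) : nat) in E *.
  set t1 := \sum_(c | P c) ((sigma c < sigma a) && (pi b < pi' c) : nat) in E *.
  set t2 := \sum_(c | P c) ((sigma c < sigma b) && (pi a < pi' c) : nat) in E *.
  set t3 := \sum_(c | P c) ((sigma a < sigma c) && (pi' c < pi b) : nat) in E *.
  set t4 := \sum_(c | P c) ((sigma b < sigma c) && (pi' c < pi a) : nat) in E *.
  set w := \sum_(c | P c) ((sigma a < sigma c) && (sigma c < sigma b) : nat) in E W *.
  set u := \sum_(x | P x) \sum_(y | P y) ((sigma x < sigma y) && (pi y < pi x) : nat).
  lia.
lia.
Qed.

Lemma reduce (pi sigma : 'S_d) : Ko pi sigma = 0 \/
  exists pi' sigma' : 'S_d, footrule pi' sigma' < footrule pi sigma /\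
    Ko pi sigma + footrule pi' sigma' <= Ko pi' sigma' + footrule pi sigma.
Proof.
case: (boolP [exists e, pi e < sigma e]) => [/existsP [e he]|/existsPn h1].
  by right; have [p' [h1 h2]] := step _ _ _ he; exists p', sigma.
case: (boolP [exists e, sigma e < pi e]) => [/existsP [e he]|/existsPn h2].
  right; have [s' [h3 h4]] := step _ _ _ he; exists pi, s'.
  rewrite !(F_sym pi) !(Ko_sym pi) in h3 h4 *; split => //.
left; rewrite /Ko big1 // => x _; rewrite big1 // => y _.
have e : forall e, (pi e : nat) = sigma e.
  by move=> e; have := h1 e; have := h2 e; lia.
rewrite (e x) (e y); by case: ltngtP.
Qed.

Lemma Ko_le_F (pi sigma : 'S_d) : Ko pi sigma <= footrule pi sigma.
Proof.
move: {2}(footrule pi sigma) (leqnn (footrule pi sigma)) => n.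
elim: n pi sigma => [|n IH] pi sigma hF;
  case: (reduce pi sigma) => [->//|[p' [s' [h1 h2]]]].
  lia.
have hh : footrule p' s' <= n by lia.
have := IH p' s' hh; lia.
Qed.

End Dist.

Lemma costK_le_F (d : nat) (S : {set 'S_d}) (s : 'S_d) : cost_K S s <= cost_F S s.
Proof.
apply: leq_sum => p _; rewrite kendall_Ko; exact: Ko_le_F.
Qed.

Lemma costF_le_2K (d : nat) (S : {set 'S_d}) (s : 'S_d) : cost_F S s <= 2 * cost_K S s.
Proof.
rewrite /cost_K big_distrr /=; apply: leq_sum => p _; rewrite kendall_Ko; exact: footrule_le2.
Qed.

Import Order.TTheory GRing.Theory Num.Theory.
Local Open Scope ring_scope.

Theorem theoremA2 (R : realType) (d g : nat) (S : {set 'S_d})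
  (grp : 'I_d -> 'I_g) (al be : 'I_g -> R) (k : nat) (alpha : R)
  (pit : 'S_d) :
  S != set0 ->
  (forall i, 0 <= al i <= 1) ->
  (forall i, 0 <= be i <= 1) ->
  (1 <= k <= d)%N ->
  1 <= alpha ->
  (exists sigma : 'S_d, k_fair grp al be k sigma) ->
  k_fair grp al be k pit ->
  (forall sigma : 'S_d, k_fair grp al be k sigma ->
     (cost_F S pit)%:R <= alpha * (cost_F S sigma)%:R) ->
  forall sigma : 'S_d, k_fair grp al be k sigma ->
     (cost_K S pit)%:R <= 2 * alpha * (cost_K S sigma)%:R.
Proof.
move=> _ _ _ _ ha _ _ hopt sigma hs.
have h1 : (cost_K S pit)%:R <= (cost_F S pit)%:R :> R by rewrite ler_nat costK_le_F.
have h2 := hopt sigma hs.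
have h3 : (cost_F S sigma)%:R <= 2 * (cost_K S sigma)%:R :> R.
  by rewrite -natrM ler_nat costF_le_2K.
have a0 : 0 <= alpha by apply: le_trans ha.
apply: (le_trans h1); apply: (le_trans h2).
rewrite -mulrA mulrCA; exact: (ler_wpM2l a0 h3).
Qed.
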